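(* Let $\alpha=[a_0;a_1,a_2,\dots]$ be irrational with convergents $p_k/q_k$. For integers $k \ge 1$ and $0 \le M <q_k$ let \[ B_{k,M}^*(x)= \log \frac{P_M^* (\alpha , (-1)^k x/q_k)}{P_M^* (p_k/q_k , (-1)^kx/q_k)} - \sum_{\substack{1 \le n \le M, \\ n \ne q_{k-1},\ n\ne q_k-q_{k-1}}} \sin (\pi n\| q_k \alpha \| /q_k) \cot \left( \pi \frac{n(-1)^k p_k+x}{q_k} \right) , \] where for $\beta\in\{\alpha,p_k/q_k\}$, \[ P_M^*(\beta , y) = \prod_{\substack{1 \le n \le M, \\ n \ne q_{k-1},\ n\ne q_k-q_{k-1}}} |2 \sin (\pi (n \beta + y))| . \] Let $k \ge 1$ and $0 \le M < q_k$, and assume that $q_k \| q_k \alpha \| \le 2(1-c_k)$ and $-2<x \le 2-\frac{q_k \| q_k \alpha \|}{1-c_k}$ with some $c_k$ such that $100/q_k^2 \le c_k<1$. Then \[ -C \frac{\log (4/c_k)}{(2-|x|)^2 a_{k+1}^2} \le B_{k,M}^*(x) \le C \frac{1}{a_{k+1}^2 q_k} \] with a universal constant $C>0$.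
   Context: $p_k/q_k=[a_0;a_1,\dots,a_k]$ are the convergents of $\alpha$ (with $q_{0}=1$); $\|y\|$ is distance to nearest integer. *)

(* Defs.v *)
From Stdlib Require Import Reals ZArith List Bool.
Open Scope R_scope.
Local Open Scope bool_scope.

Definition Zfloor (x : R) : Z := Int_part x.

Definition dist_int (y : R) : R :=
  Rmin (y - IZR (Zfloor y)) (IZR (Zfloor y) + 1 - y).

Definition irrational (x : R) : Prop :=
  ~ exists (p q : Z), q <> 0%Z /\ x = IZR p / IZR q.

(* complete quotients: x_0 = alpha, x_{k+1} = 1/(x_k - a_k) *)
Fixpoint cf_tail (alpha : R) (k : nat) : R :=
  match k with
  | O => alpha
  | S k' => / (cf_tail alpha k' - IZR (Zfloor (cf_tail alpha k')))
  end.

Definition cf_a (alpha : R) (k : nat) : Z := Zfloor (cf_tail alpha k).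

(* ((p_k, q_k), (p_{k-1}, q_{k-1})) with p_{-1} = 1, q_{-1} = 0, p_0 = a_0, q_0 = 1 *)
Fixpoint cf_pq (alpha : R) (k : nat) : (Z * Z) * (Z * Z) :=
  match k with
  | O => ((cf_a alpha 0, 1%Z), (1%Z, 0%Z))
  | S k' =>
      let '((p, q), (p', q')) := cf_pq alpha k' in
      let a := cf_a alpha (S k') in
      (((a * p + p')%Z, (a * q + q')%Z), (p, q))
  end.

Definition cf_p (alpha : R) (k : nat) : Z := fst (fst (cf_pq alpha k)).
Definition cf_q (alpha : R) (k : nat) : Z := snd (fst (cf_pq alpha k)).

Definition cot (t : R) : R := cos t / sin t.

Definition idx (alpha : R) (k M : nat) : list nat :=
  filter (fun n : nat =>
            negb (Z.eqb (Z.of_nat n) (cf_q alpha (k - 1)))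
            && negb (Z.eqb (Z.of_nat n) (cf_q alpha k - cf_q alpha (k - 1))))
         (seq 1 M).

Definition Pstar (alpha : R) (k M : nat) (beta y : R) : R :=
  fold_right Rmult 1
    (map (fun n : nat => Rabs (2 * sin (PI * (INR n * beta + y)))) (idx alpha k M)).

Definition Bstar (alpha : R) (k M : nat) (x : R) : R :=
  let p := IZR (cf_p alpha k) in
  let q := IZR (cf_q alpha k) in
  let y := (-1) ^ k * x / q in
  ln (Pstar alpha k M alpha y / Pstar alpha k M (p / q) y)
  - fold_right Rplus 0
      (map (fun n : nat =>
              sin (PI * INR n * dist_int (q * alpha) / q)
              * cot (PI * (INR n * (-1) ^ k * p + x) / q))
           (idx alpha k M)).

(* Main.v *)
Require Import Defs.
From Stdlib Require Import Reals ZArith List.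
From Stdlib Require Import Lra Lia Psatz Bool.
Open Scope R_scope.


Lemma sinlb_eq (a:R) : sin_lb a = a - a^3/6 + a^5/120 - a^7/5040.
Proof. unfold sin_lb, sin_approx, sin_term. cbn [sum_f_R0 Nat.mul Nat.add].
rewrite !fact_simpl, !mult_INR. cbn [Factorial.fact INR]. simpl pow. field. Qed.
Lemma cosub_eq (a:R) : cos_ub a = 1 - a^2/2 + a^4/24 - a^6/720 + a^8/40320.
Proof. unfold cos_ub, cos_approx, cos_term. cbn [sum_f_R0 Nat.mul Nat.add].
rewrite !fact_simpl, !mult_INR. cbn [Factorial.fact INR]. simpl pow. field. Qed.
Lemma coslb_eq (a:R) : cos_lb a = 1 - a^2/2 + a^4/24 - a^6/720.
Proof. unfold cos_lb, cos_approx, cos_term. cbn [sum_f_R0 Nat.mul Nat.add].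
rewrite !fact_simpl, !mult_INR. cbn [Factorial.fact INR]. simpl pow. field. Qed.

Lemma PI_bounds : 3 <= PI <= 4.
Proof. split; [|exact PI_4]. pose proof PI2_3_2. lra. Qed.

Lemma vcos_le_sin v : 0 <= v <= PI/2 -> v * cos v <= sin v.
Proof.
  intros [h0 h1]. pose proof PI_bounds.
  destruct (SIN v h0 ltac:(lra)) as [Hs _].
  destruct (COS v ltac:(lra) h1) as [_ Hc].
  rewrite sinlb_eq in Hs. rewrite cosub_eq in Hc.
  assert (v <= 2) by lra.
  assert (v * cos v <= v * (1 - v^2/2 + v^4/24 - v^6/720 + v^8/40320)) by (apply Rmult_le_compat_l; lra).
  assert (v - v^3/6 + v^5/120 - v^7/5040 - v * (1 - v^2/2 + v^4/24 - v^6/720 + v^8/40320)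
          = v^3 * (1/3 - v^2/30 + v^4/840 - v^6/40320)) by field.
  assert (0 <= v^3) by (apply pow_le; lra).
  assert (v^2 <= 4) by nra.
  assert (0 <= v^4) by nra.
  assert (v^6 <= 64) by (replace (v^6) with (v^2*v^2*v^2) by ring; nra).
  assert (0 <= 1/3 - v^2/30 + v^4/840 - v^6/40320) by lra.
  nra.
Qed.

Lemma one_minus_cos H : 0 <= H <= 1 -> 1 - cos H <= H^2/2.
Proof.
  intros. pose proof PI_bounds.
  destruct (COS H ltac:(lra) ltac:(lra)) as [Hc _]. rewrite coslb_eq in Hc.
  assert (0 <= H^4) by (apply pow_le; lra).
  assert (H^2 <= 4) by nra.
  assert (H^6 <= 4 * H^4).
  { replace (H^6) with (H^2*H^4) by ring. nra. }
  lra.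
Qed.

Lemma cos_le_1' H : cos H <= 1.
Proof. pose proof (COS_bound H). lra. Qed.

Lemma ln_le_sub1 z : 0 < z -> ln z <= z - 1.
Proof. intros. pose proof (exp_ineq1_le (ln z)). rewrite exp_ln in H0; lra. Qed.

Lemma ln_ge_1_inv z : 0 < z -> 1 - / z <= ln z.
Proof. intros. pose proof (ln_le_sub1 (/ z) ltac:(apply Rinv_0_lt_compat; lra)).
  rewrite ln_Rinv in H0 by lra. lra. Qed.

Lemma ln_le_mono a b : 0 < a -> a <= b -> ln a <= ln b.
Proof. intros. destruct (Req_dec a b). subst; lra. left; apply ln_increasing; lra. Qed.

Lemma cot_pos_bound u : 0 < u <= PI/2 -> 0 < sin u /\ 0 <= cos u / sin u <= / u.
Proof.
  intros. pose proof PI_bounds.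
  assert (0 < sin u) by (apply sin_gt_0; lra).
  assert (0 <= cos u) by (apply cos_ge_0; lra).
  pose proof (vcos_le_sin u ltac:(lra)).
  split; [lra|split].
  - unfold Rdiv. apply Rmult_le_pos; [lra|left; apply Rinv_0_lt_compat; lra].
  - apply (Rmult_le_reg_r (sin u * u)). nra.
    field_simplify; try lra. 
Qed.

Lemma Rabs_div' a b : Rabs (a / b) = Rabs a / Rabs b.
Proof. unfold Rdiv. rewrite Rabs_mult, Rabs_inv. reflexivity. Qed.

Lemma PI2_le_16 : PI^2 <= 16.
Proof. pose proof PI_bounds. nra. Qed.

Lemma sq_pos x : x <> 0 -> 0 < x^2.
Proof. intros. replace (x^2) with (Rsqr x) by (unfold Rsqr; ring). apply Rsqr_pos_lt; auto. Qed.


Definition Gt (u H : R) : R := ln (Rabs (sin (u+H)) / Rabs (sin u)) - sin H * cot u.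

Lemma lnbound z t e : z = 1 - e + t -> 0 <= e <= 1/10 -> 2/5 <= z ->
  -6 * t^2 - 2 * e <= ln z - t /\ ln z - t <= 0.
Proof.
  intros Hz He Hz2.
  pose proof (ln_ge_1_inv z ltac:(lra)). pose proof (ln_le_sub1 z ltac:(lra)).
  split; [|lra].
  assert (E: 1 - / z - t = - e - (z-1)^2 / z) by (replace t with (z - 1 + e) by lra; field; lra).
  remember (z - 1) as w eqn:Hw.
  assert (w^2 / z <= (5/2) * w^2).
  { unfold Rdiv. assert (/ z <= / (2/5)) by (apply Rinv_le_contravar; lra).
    assert (/ (2/5) = 5/2) by field. assert (0 <= w^2) by (apply pow2_ge_0). nra. }
  assert (w^2 <= 2*t^2 + 2*e^2).
  { replace w with (t - e) by lra. pose proof (pow2_ge_0 (t+e)). nra. }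
  nra.
Qed.

Lemma cot_bound u : 0 < Rabs u <= PI/2 ->
  sin u <> 0 /\ Rabs (cot u) <= / Rabs u /\ (0 < u -> 0 <= cot u) /\ (u < 0 -> cot u <= 0).
Proof.
  intros Hu. unfold cot.
  destruct (Rle_or_lt 0 u) as [Hp|Hn].
  - rewrite Rabs_right in * by lra.
    destruct (cot_pos_bound u ltac:(lra)) as [Hs Hc].
    rewrite Rabs_right by lra. repeat split; try lra. all: try (intros; lra). rewrite Rabs_right by lra; lra.
  - rewrite Rabs_left in * by lra.
    destruct (cot_pos_bound (-u) ltac:(lra)) as [Hs Hc].
    rewrite sin_neg, cos_neg in *.
    assert (cos u / sin u = - (cos u / - sin u)) by (field; lra).
    rewrite H, Rabs_Ropp, Rabs_right by lra. repeat split; try lra. all: try (intros; lra). rewrite Rabs_left by lra; lra.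
Qed.

Lemma Gt_eq u H : sin u <> 0 -> Gt u H = ln (Rabs (cos H + sin H * cot u)) - sin H * cot u.
Proof.
  intros. unfold Gt. f_equal. f_equal.
  rewrite <- Rabs_div' by auto. f_equal. rewrite sin_plus. unfold cot. field. auto.
Qed.

Lemma sin_plus_cot u H : sin u <> 0 -> sin (u + H) = sin u * (cos H + sin H * cot u).
Proof. intros. rewrite sin_plus. unfold cot. field. auto. Qed.

Lemma term_common (q rho eps D : R) :
  11 <= q -> 0 < eps <= D -> D < 1 -> rho <> 0 -> Rabs rho <= q/2 ->
  forall u H, u = PI * rho / q -> H = PI * eps / q ->
  sin u <> 0 /\ 0 <= 1 - cos H <= 8 * D^2 / q^2 /\ 1 - cos H <= 1/10 /\
  Rabs (sin H * cot u) <= eps / Rabs rho /\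
  (0 < rho -> 0 <= sin H * cot u) /\ (rho < 0 -> sin H * cot u <= 0).
Proof.
  intros Hq He HD Hr Hrq u H Hudef HHdef. pose proof PI_bounds.
  assert (Hqp : 0 < q) by lra.
  assert (HH : 0 < H <= PI * D / q).
  { rewrite HHdef; split. apply Rdiv_lt_0_compat; nra.
    unfold Rdiv; apply Rmult_le_compat_r. left; apply Rinv_0_lt_compat; lra. nra. }
  assert (PI * D / q <= 4/11).
  { apply (Rmult_le_reg_r q); [lra|]. field_simplify; nra. }
  assert (Hu : 0 < Rabs u <= PI/2).
  { rewrite Hudef, Rabs_div', Rabs_mult, (Rabs_right PI), (Rabs_right q) by lra.
    split. apply Rdiv_lt_0_compat; [|lra]. apply Rmult_lt_0_compat; [lra|]. apply Rabs_pos_lt; auto.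
    apply (Rmult_le_reg_r q); [lra|]. field_simplify; nra. }
  destruct (cot_bound u Hu) as (Hs & Hc & Hc1 & Hc2).
  assert (Hsin : 0 < sin H <= H).
  { split. apply sin_gt_0; lra. left; apply sin_lt_x; lra. }
  pose proof (one_minus_cos H ltac:(lra)). pose proof (COS_bound H).
  assert (H^2/2 <= 8 * D^2/q^2).
  { assert (H^2 <= (PI*D/q)^2) by (apply pow_incr; lra).
    assert ((PI*D/q)^2 <= 16 * D^2/q^2).
    { replace ((PI*D/q)^2) with (PI^2 * (D^2/q^2)) by (field; lra).
      replace (16 * D^2/q^2) with (16 * (D^2/q^2)) by (field; lra).
      assert (0 <= D^2/q^2) by (apply Rmult_le_pos; [apply pow2_ge_0| left; apply Rinv_0_lt_compat; apply pow_lt; lra]).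
      pose proof PI2_le_16. nra. }
    lra. }
  assert (H^2/2 <= 1/10) by nra.
  split; [auto|]. split; [lra|]. split; [lra|]. split.
  - rewrite Rabs_mult, (Rabs_right (sin H)) by lra.
    assert (Rabs (cot u) >= 0) by (apply Rle_ge, Rabs_pos).
    assert (sin H * Rabs (cot u) <= H * / Rabs u).
    { apply Rmult_le_compat; lra. }
    assert (H * / Rabs u = eps / Rabs rho).
    { rewrite HHdef, Hudef, Rabs_div', Rabs_mult, (Rabs_right PI), (Rabs_right q) by lra.
      field. split; [|split]; try lra. apply Rabs_no_R0; auto. }
    lra.
  - split; intros.
    + apply Rmult_le_pos; [lra|]. apply Hc1. rewrite Hudef. apply Rdiv_lt_0_compat; nra.
    + assert (u < 0).
      { rewrite Hudef; unfold Rdiv. assert (0 < / q) by (apply Rinv_0_lt_compat; lra).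
        assert (PI * rho < 0) by nra. nra. }
      match goal with h : u < 0 |- _ => specialize (Hc2 h) end. nra.
Qed.

Lemma term_reg (q rho eps D : R) :
  11 <= q -> 0 < eps <= D -> D < 1 -> rho <> 0 -> Rabs rho <= q/2 ->
  (0 < rho \/ 2 * D <= - rho) ->
  forall u H, u = PI * rho / q -> H = PI * eps / q ->
  -6 * (D^2 / rho^2) - 16 * (D^2 / q^2) <= Gt u H /\ Gt u H <= 0 /\ sin u <> 0 /\ sin (u + H) <> 0.
Proof.
  intros Hq He HD Hr Hrq Hcase u H Hu HH.
  destruct (term_common q rho eps D Hq He HD Hr Hrq u H Hu HH) as (Hs & He1 & He2 & Ht & Ht1 & Ht2).
  rewrite Gt_eq by auto. rewrite (sin_plus_cot u H Hs).
  set (t := sin H * cot u) in *. clearbody t.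
  assert (Hrp : 0 < Rabs rho) by (apply Rabs_pos_lt; auto).
  assert (HtD : Rabs t <= D / Rabs rho).
  { apply (Rle_trans _ (eps / Rabs rho)); auto. unfold Rdiv. apply Rmult_le_compat_r; [left; apply Rinv_0_lt_compat; lra|lra]. }
  assert (Ht2b : t^2 <= D^2 / rho^2).
  { rewrite <- (pow2_abs t). replace (D^2/rho^2) with ((D / Rabs rho)^2).
    2:{ rewrite <- (pow2_abs rho). field. lra. }
    apply pow_incr. split; [apply Rabs_pos|auto]. }
  assert (Hz : 2/5 <= cos H + t).
  { destruct Hcase as [Hp|Hn].
    - specialize (Ht1 Hp). lra.
    - assert (rho < 0) by lra. rewrite (Rabs_left rho) in HtD by lra.
      assert (D / - rho <= 1/2).
      { apply (Rmult_le_reg_r (- rho)); [lra|]. field_simplify; lra. }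
      assert (- t <= D / - rho) by (pose proof (Rle_abs (-t)); rewrite Rabs_Ropp in *; lra).
      lra. }
  rewrite Rabs_right by lra.
  destruct (lnbound (cos H + t) t (1 - cos H) ltac:(ring) ltac:(lra) Hz). split; [lra|split;[lra|split;[auto|]]].
  intro Z0. apply Rmult_integral in Z0. lra.
Qed.

Lemma term_spec (q rho eps D c : R) :
  11 <= q -> 0 < eps <= D -> D < 1 -> rho < 0 -> Rabs rho <= q/2 ->
  D <= (1 - c) * (- rho) -> 100 / q^2 <= c -> c < 1 ->
  forall u H, u = PI * rho / q -> H = PI * eps / q ->
  ln (c / 4) <= Gt u H /\ Gt u H <= 0 /\ sin u <> 0 /\ sin (u + H) <> 0.
Proof.
  intros Hq He HD Hr Hrq HDc Hc Hc1 u H Hu HH.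
  destruct (term_common q rho eps D Hq He HD ltac:(lra) Hrq u H Hu HH) as (Hs & He1 & He2 & Ht & Ht1 & Ht2).
  rewrite Gt_eq by auto. rewrite (sin_plus_cot u H Hs).
  specialize (Ht2 Hr).
  set (t := sin H * cot u) in *. clearbody t.
  rewrite (Rabs_left rho) in Ht by lra. rewrite (Rabs_left1 t) in Ht by lra.
  assert (eps / - rho <= 1 - c).
  { apply (Rmult_le_reg_r (- rho)); [lra|]. field_simplify; lra. }
  assert (0 < 100 / q^2) by (apply Rdiv_lt_0_compat; [lra| apply pow_lt; lra]).
  assert (8 * D^2 / q^2 <= 8 / 100 * c).
  { assert (D^2 <= 1) by (assert (0 < D) by lra; nra).
    assert (8 * D^2 / q^2 <= 8 * (1 / q^2)).
    { unfold Rdiv. rewrite Rmult_assoc. apply Rmult_le_compat_l; [lra|].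
      apply Rmult_le_compat_r; [left; apply Rinv_0_lt_compat, pow_lt; lra|lra]. }
    assert (8 * (1/q^2) = 8/100 * (100/q^2)) by (field; lra). nra. }
  assert (Hz : c / 4 <= cos H + t) by lra.
  rewrite Rabs_right by lra.
  pose proof (ln_le_mono (c/4) (cos H + t) ltac:(lra) Hz).
  pose proof (ln_le_sub1 (cos H + t) ltac:(lra)).
  split; [lra|split;[lra|split;[auto|]]].
  intro Z0. apply Rmult_integral in Z0. lra.
Qed.


Fixpoint esg (k : nat) : Z := match k with O => 1%Z | S k' => (- esg k')%Z end.

Lemma esg_IZR k : IZR (esg k) = (-1)^k.
Proof. induction k; simpl; [reflexivity|]. rewrite opp_IZR, IHk. ring. Qed.

Lemma esg_pm k : esg k = 1%Z \/ esg k = (-1)%Z.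
Proof. induction k; simpl; lia. Qed.

Lemma floor_spec y : IZR (Defs.Zfloor y) <= y < IZR (Defs.Zfloor y) + 1.
Proof. unfold Defs.Zfloor. destruct (base_Int_part y). lra. Qed.

Definition Inv (alpha : R) (k : nat) : Prop :=
  let '((p, q), (p', q')) := cf_pq alpha k in
  let X := cf_tail alpha (S k) in
  alpha * (IZR q * X + IZR q') = IZR p * X + IZR p' /\ 1 < X /\
  (1 <= q)%Z /\ (0 <= q')%Z /\ (q' <= q)%Z /\ (p * q' - p' * q = - esg k)%Z.

Lemma irr_ne (alpha : R) (P Q : Z) : irrational alpha -> (1 <= Q)%Z -> alpha * IZR Q <> IZR P.
Proof.
  intros Hi HQ E. apply Hi. exists P, Q. split; [lia|].
  assert (IZR Q <> 0) by (apply not_0_IZR; lia).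
  rewrite <- E. field. auto.
Qed.

Lemma Inv_all alpha : irrational alpha -> forall k, Inv alpha k.
Proof.
  intros Hi k. induction k.
  - unfold Inv. simpl cf_pq. cbv zeta.
    unfold cf_a. change (cf_tail alpha 0) with alpha.
    pose proof (floor_spec alpha) as Hf.
    assert (alpha <> IZR (Defs.Zfloor alpha)).
    { intro E. apply (irr_ne alpha (Defs.Zfloor alpha) 1 Hi ltac:(lia)). replace (IZR 1) with 1 by reflexivity. rewrite Rmult_1_r. exact E. }
    change (cf_tail alpha 1) with (/ (alpha - IZR (Defs.Zfloor alpha))).
    assert (0 < alpha - IZR (Defs.Zfloor alpha) < 1) by lra.
    repeat split; try lia.
    + field. lra.
    + replace 1 with (/ 1) at 1 by field. apply Rinv_lt_contravar; lra.
    + simpl. lia.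
  - unfold Inv in *. simpl cf_pq.
    destruct (cf_pq alpha k) as [[p q] [p' q']].
    destruct IHk as (E & HX & Hq & Hq' & Hqq & Hdet).
    set (X := cf_tail alpha (S k)) in *.
    change (cf_tail alpha (S (S k))) with (/ (X - IZR (Defs.Zfloor X))).
    unfold cf_a. change (cf_tail alpha (S k)) with X.
    set (a := Defs.Zfloor X).
    pose proof (floor_spec X) as Hf. fold a in Hf.
    assert (Ha : (1 <= a)%Z).
    { assert (0 < IZR a) by lra. apply lt_IZR in H. lia. }
    assert (HXa : X <> IZR a).
    { intro EX. rewrite EX in E.
      apply (irr_ne alpha (p * a + p') (q * a + q') Hi ltac:(nia)).
      rewrite plus_IZR, !mult_IZR, plus_IZR, mult_IZR. lra. }
    assert (Hy : 0 < X - IZR a < 1) by lra.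
    set (X' := / (X - IZR a)).
    assert (HX'1 : X' * (X - IZR a) = 1) by (unfold X'; field; lra).
    assert (HX' : 1 < X').
    { unfold X'. replace 1 with (/ 1) at 1 by field. apply Rinv_lt_contravar; lra. }
    clearbody X'.
    repeat split; try lia.
    + rewrite !plus_IZR, !mult_IZR.
      set (P := IZR p) in *. set (Q := IZR q) in *. set (P' := IZR p') in *. set (Q' := IZR q') in *.
      set (A := IZR a) in *.
      assert (E1 : alpha*Q*A + alpha*Q' - P*A - P' = -(alpha*Q - P) * (X - A)).
      { assert (alpha*Q*A + alpha*Q' - P*A - P' + (alpha*Q - P)*(X - A) = alpha*(Q*X+Q') - (P*X+P')) by ring.
        lra. }
      assert (E2 : X' * (alpha*Q*A + alpha*Q' - P*A - P') = -(alpha*Q - P)).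
      { rewrite E1. transitivity (-(alpha*Q-P) * (X' * (X - A))); [ring| rewrite HX'1; ring]. }
      assert (alpha * ((A * Q + Q') * X' + Q) - ((A * P + P') * X' + P) = X' * (alpha*Q*A + alpha*Q' - P*A - P') + (alpha * Q - P)) by ring.
      lra.
    + lra.
    + all: try (simpl esg); try nia.
    + simpl esg. rewrite <- Hdet. ring.
Qed.

Lemma cf_pq_snd alpha j : snd (cf_pq alpha (S j)) = fst (cf_pq alpha j).
Proof. simpl. destruct (cf_pq alpha j) as [[p q] [p' q']]. reflexivity. Qed.

Lemma cf_facts alpha k : irrational alpha -> (1 <= k)%nat ->
  exists p q p' q',
    cf_p alpha k = p /\ cf_q alpha k = q /\ cf_q alpha (k - 1) = q' /\
    (1 <= q')%Z /\ (q' <= q)%Z /\ (p * q' - p' * q = - esg k)%Z /\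
    1 < cf_tail alpha (S k) /\ IZR (cf_a alpha (S k)) <= cf_tail alpha (S k) /\
    (1 <= cf_a alpha (S k))%Z /\
    IZR q * alpha - IZR p = IZR (esg k) / (IZR q * cf_tail alpha (S k) + IZR q').
Proof.
  intros Hi Hk. destruct k as [|j]; [lia|].
  pose proof (Inv_all alpha Hi (S j)) as I1. pose proof (Inv_all alpha Hi j) as I0.
  pose proof (cf_pq_snd alpha j) as Hs.
  unfold Inv in I1, I0. unfold cf_p, cf_q. replace (S j - 1)%nat with j by lia.
  destruct (cf_pq alpha (S j)) as [[p q] [p' q']].
  destruct (cf_pq alpha j) as [[p0 q0] [p0' q0']]. simpl in Hs. inversion Hs; subst p0 q0.
  destruct I1 as (E & HX & Hq & Hq' & Hqq & Hdet).
  destruct I0 as (_ & _ & Hq0 & _).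
  exists p, q, p', q'. cbn [fst snd].
  set (X := cf_tail alpha (S (S j))) in *.
  pose proof (floor_spec X) as Hf. unfold cf_a. fold X.
  assert (Ha : (1 <= Defs.Zfloor X)%Z).
  { assert (0 < IZR (Defs.Zfloor X)) by lra. apply lt_IZR in H. lia. }
  repeat split; try lia; try lra.
  all: try (rewrite Hdet; simpl esg; ring).
  assert (Hpos : 0 < IZR q * X + IZR q').
  { assert (1 <= IZR q) by (apply IZR_le; lia). assert (0 <= IZR q') by (apply IZR_le; lia). nra. }
  apply (Rmult_eq_reg_r (IZR q * X + IZR q')); [|lra].
  unfold Rdiv. rewrite Rmult_assoc, Rinv_l by lra. rewrite Rmult_1_r.
  pose proof (f_equal IZR Hdet) as H.
  rewrite minus_IZR, !mult_IZR, opp_IZR in H.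
  assert ((IZR q * alpha - IZR p) * (IZR q * X + IZR q') = IZR q * (alpha * (IZR q * X + IZR q')) - IZR p * (IZR q * X + IZR q')) by ring.
  rewrite H0, E. lra.
Qed.


Lemma NT_inj (p q p' q' e n1 n2 m1 m2 : Z) :
  (e = 1 \/ e = -1)%Z -> (p * q' - p' * q = - e)%Z -> (2 <= q)%Z ->
  (1 <= n1 < q)%Z -> (1 <= n2 < q)%Z ->
  (e * n1 * p - q * m1 = e * n2 * p - q * m2)%Z -> n1 = n2.
Proof.
  intros He Hd Hq H1 H2 E.
  assert (K : (n1 - n2 = q * (e * (p' * (n1 - n2) - e * q' * (m1 - m2))))%Z).
  { assert (E1 : (q' * (e*n1*p - q*m1) = q' * (e*n2*p - q*m2))%Z) by (rewrite E; ring).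
    assert (E2 : ((n1 - n2) * (p*q' - p'*q) = (n1-n2)*(-e))%Z) by (rewrite Hd; ring).
    destruct He; subst e; nia. }
  set (KK := (e * (p' * (n1 - n2) - e * q' * (m1 - m2)))%Z) in K.
  assert (KK = 0)%Z by nia. nia.
Qed.

Lemma NT_excl (p q p' q' e n m : Z) :
  (e = 1 \/ e = -1)%Z -> (p * q' - p' * q = - e)%Z -> (2 <= q)%Z -> (0 <= q' <= q)%Z ->
  (1 <= n < q)%Z -> n <> q' -> n <> (q - q')%Z ->
  let r := (e * n * p - q * m)%Z in (r <> 0 /\ r <> 1 /\ r <> -1)%Z.
Proof.
  intros He Hd Hq Hq' Hn N1 N2 r.
  assert (G : forall eps, (r = eps)%Z -> (n + eps * q' = q * (- e * (e * q' * m - n * p')))%Z).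
  { intros eps Er. unfold r in Er.
    assert (E1 : (e * q' * (e*n*p - q*m) = e * q' * eps)%Z) by (rewrite Er; ring).
    assert (E2 : (n * (p*q' - p'*q) = n*(-e))%Z) by (rewrite Hd; ring).
    destruct He; subst e; nia. }
  repeat split; intro Er; specialize (G _ Er);
  set (KK := (- e * (e * q' * m - n * p'))%Z) in G.
  - assert (KK = 0 \/ KK >= 1 \/ KK <= -1)%Z as [Hk|[Hk|Hk]] by lia; nia.
  - assert (KK = 0 \/ KK = 1 \/ KK >= 2 \/ KK <= -1)%Z as [Hk|[Hk|[Hk|Hk]]] by lia; nia.
  - assert (KK = 0 \/ KK >= 1 \/ KK <= -1)%Z as [Hk|[Hk|Hk]] by lia; nia.
Qed.

Definition rsum (l : list R) : R := fold_right Rplus 0 l.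

Lemma rsum_le {A} (f g : A -> R) (L : list A) :
  (forall a, In a L -> f a <= g a) -> rsum (map f L) <= rsum (map g L).
Proof.
  induction L; simpl; intros; [lra|].
  assert (f a <= g a) by auto. assert (rsum (map f L) <= rsum (map g L)) by auto. lra.
Qed.

Lemma rsum_plus {A} (f g : A -> R) (L : list A) :
  rsum (map (fun a => f a + g a) L) = rsum (map f L) + rsum (map g L).
Proof. induction L; simpl; [lra|]. rewrite IHL. ring. Qed.

Lemma rsum_scal {A} (c : R) (f : A -> R) (L : list A) :
  rsum (map (fun a => c * f a) L) = c * rsum (map f L).
Proof. induction L; simpl; [lra|]. rewrite IHL. ring. Qed.

Lemma rsum_const {A} (c : R) (L : list A) :
  rsum (map (fun _ => c) L) = c * INR (length L).
Proof. induction L; unfold rsum in *; cbn [map fold_right length]; [simpl; lra|]. rewrite IHL, S_INR. ring. Qed.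

Lemma rsum_map {A B} (f : B -> R) (g : A -> B) (L : list A) :
  rsum (map (fun a => f (g a)) L) = rsum (map f (map g L)).
Proof. rewrite map_map. reflexivity. Qed.

Lemma rsum_filter {A} (P : A -> bool) (f : A -> R) (L : list A) :
  rsum (map f L) = rsum (map f (filter P L)) + rsum (map f (filter (fun a => negb (P a)) L)).
Proof.
  induction L; simpl; [lra|]. destruct (P a); simpl; rewrite IHL; ring.
Qed.

Lemma NoDup_map_in {A B} (f : A -> B) (L : list A) :
  NoDup L -> (forall a b, In a L -> In b L -> f a = f b -> a = b) -> NoDup (map f L).
Proof.
  induction L; simpl; intros Hn Hi; constructor.
  - inversion Hn; subst. intro Hin. apply in_map_iff in Hin. destruct Hin as [b [Eb Hb]].
    assert (b = a) by (apply Hi; auto). subst. contradiction.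
  - inversion Hn; subst. apply IHL; auto.
Qed.

Lemma sum_eq_v (v : Z) (f : Z -> R) (L : list Z) :
  NoDup L -> (forall j, In j L -> j = v) -> 0 <= f v -> rsum (map f L) <= f v.
Proof.
  intros Hn Hv Hf. destruct L as [|a L]; simpl; [lra|].
  destruct L as [|b L].
  - simpl. rewrite (Hv a) by (simpl; auto). lra.
  - exfalso. inversion Hn; subst. apply H1. rewrite (Hv a), (Hv b) by (simpl; auto). simpl; auto.
Qed.

Lemma sum_inv_sq_aux (N : nat) : forall L : list Z, NoDup L ->
  (forall j, In j L -> (1 <= j <= Z.of_nat N)%Z) ->
  rsum (map (fun j => / (IZR j)^2) L) <= 2 - 2 / (INR N + 1).
Proof.
  induction N; intros L Hn HL.
  - destruct L as [|a L]; simpl. replace (INR 0) with 0 by reflexivity. lra.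
    specialize (HL a (or_introl eq_refl)). simpl in HL. lia.
  - rewrite (rsum_filter (fun j => Z.eqb j (Z.of_nat (S N)))).
    assert (A1 : rsum (map (fun j => / IZR j ^ 2) (filter (fun j => Z.eqb j (Z.of_nat (S N))) L))
                <= / IZR (Z.of_nat (S N)) ^ 2).
    { apply (sum_eq_v (Z.of_nat (S N)) (fun j => / IZR j ^ 2)). apply NoDup_filter; auto.
      intros j Hj. apply filter_In in Hj. destruct Hj. apply Z.eqb_eq; auto.
      left. apply Rinv_0_lt_compat. apply pow_lt. apply IZR_lt. lia. }
    assert (A2 : rsum (map (fun j => / IZR j ^ 2) (filter (fun j => negb (Z.eqb j (Z.of_nat (S N)))) L))
                <= 2 - 2 / (INR N + 1)).
    { apply IHN. apply NoDup_filter; auto.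
      intros j Hj. apply filter_In in Hj. destruct Hj as [Hj1 Hj2]. specialize (HL j Hj1).
      apply negb_true_iff, Z.eqb_neq in Hj2. lia. }
    rewrite <- INR_IZR_INZ in A1. rewrite S_INR in *.
    assert (0 <= INR N) by apply pos_INR.
    assert (/ (INR N + 1) ^ 2 <= 2 / (INR N + 1) - 2 / (INR N + 1 + 1)).
    { apply (Rmult_le_reg_r ((INR N + 1)^2 * (INR N + 1 + 1))). apply Rmult_lt_0_compat; [apply pow_lt|]; lra.
      field_simplify; try lra. }
    lra.
Qed.

Lemma sum_inv_sq (L : list Z) : NoDup L -> (forall j, In j L -> (1 <= j)%Z) ->
  rsum (map (fun j => / (IZR j)^2) L) <= 2.
Proof.
  intros Hn HL.
  set (N := fold_right (fun j acc => Z.max j acc) 0%Z L).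
  assert (HN : forall j, In j L -> (j <= N)%Z).
  { unfold N. clear. induction L; simpl; intros; [contradiction|]. destruct H; subst; [lia|].
    specialize (IHL j H). lia. }
  assert (0 <= N)%Z by (unfold N; clear; induction L; simpl; lia).
  pose proof (sum_inv_sq_aux (Z.to_nat N) L Hn ltac:(intros j Hj; specialize (HL j Hj); specialize (HN j Hj); lia)).
  assert (0 <= 2 / (INR (Z.to_nat N) + 1)).
  { pose proof (pos_INR (Z.to_nat N)). apply Rmult_le_pos; [lra|]. left; apply Rinv_0_lt_compat; lra. }
  lra.
Qed.

Lemma sum_indicator (v : Z) (S0 : R) (L : list Z) : NoDup L -> S0 <= 0 ->
  S0 <= rsum (map (fun j => if Z.eqb j v then S0 else 0) L).
Proof.
  intros Hn HS. induction L as [|a L IH]; simpl; [lra|].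
  inversion Hn; subst. specialize (IH H2).
  destruct (Z.eqb a v) eqn:Ea.
  - apply Z.eqb_eq in Ea; subst.
    assert (rsum (map (fun j => if Z.eqb j v then S0 else 0) L) = 0).
    { clear - H1. induction L; simpl; auto. destruct (Z.eqb a v) eqn:E.
      apply Z.eqb_eq in E; subst. exfalso; apply H1; simpl; auto.
      rewrite IHL; [ring|]. intro; apply H1; simpl; auto. }
    change (fold_right Rplus 0 (map (fun j => if Z.eqb j v then S0 else 0) L)) with (rsum (map (fun j => if Z.eqb j v then S0 else 0) L)). lra.
  - change (fold_right Rplus 0 (map (fun j => if Z.eqb j v then S0 else 0) L)) with (rsum (map (fun j => if Z.eqb j v then S0 else 0) L)). lra.
Qed.


Lemma shift_nat v (n : nat) : exists sg, (sg = 1 \/ sg = -1) /\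
  sin (v + INR n * PI) = sg * sin v /\ cos (v + INR n * PI) = sg * cos v.
Proof.
  induction n.
  - exists 1. simpl. rewrite Rmult_0_l, Rplus_0_r. lra.
  - destruct IHn as (sg & Hs & E1 & E2). exists (- sg). split; [lra|].
    rewrite S_INR. replace (v + (INR n + 1) * PI) with ((v + INR n * PI) + PI) by ring.
    rewrite neg_sin, neg_cos, E1, E2. split; ring.
Qed.

Lemma shift_Z v (m : Z) : exists sg, (sg = 1 \/ sg = -1) /\
  sin (v + IZR m * PI) = sg * sin v /\ cos (v + IZR m * PI) = sg * cos v.
Proof.
  destruct (Z_le_gt_dec 0 m).
  - replace (IZR m) with (INR (Z.to_nat m)) by (rewrite INR_IZR_INZ; f_equal; lia).
    apply shift_nat.
  - destruct (shift_nat (v + IZR m * PI) (Z.to_nat (- m))) as (sg & Hs & E1 & E2).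
    replace (v + IZR m * PI + INR (Z.to_nat (- m)) * PI) with v in E1, E2.
    2:{ rewrite INR_IZR_INZ. rewrite Z2Nat.id by lia. rewrite opp_IZR. ring. }
    exists sg. split; auto. split.
    + destruct Hs; subst sg; lra.
    + destruct Hs; subst sg; lra.
Qed.

Lemma Rabs_sin_sgn s z : (s = 1 \/ s = -1) -> Rabs (2 * sin (s * z)) = 2 * Rabs (sin z).
Proof.
  intros [-> | ->].
  - rewrite Rmult_1_l, Rabs_mult, Rabs_right by lra. reflexivity.
  - replace (-1 * z) with (- z) by ring. rewrite sin_neg, Rabs_mult, Rabs_Ropp, (Rabs_right 2) by lra. reflexivity.
Qed.

Definition term_n (alpha P Q s x delta N : R) : R :=
  ln (Rabs (2 * sin (PI * (N * alpha + s * x / Q))) / Rabs (2 * sin (PI * (N * (P / Q) + s * x / Q))))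
  - sin (PI * N * delta / Q) * cot (PI * (N * s * P + x) / Q).

Lemma term_n_eq (alpha P Q s x delta N R0 : R) (m : Z) :
  (s = 1 \/ s = -1) -> 0 < Q -> Q * alpha - P = s * delta ->
  R0 = s * N * P - Q * IZR m ->
  sin (PI * (R0 + x) / Q) <> 0 -> sin (PI * (R0 + x) / Q + PI * (N * delta) / Q) <> 0 ->
  term_n alpha P Q s x delta N = Gt (PI * (R0 + x) / Q) (PI * (N * delta) / Q) /\
  0 < Rabs (2 * sin (PI * (N * alpha + s * x / Q))) /\
  0 < Rabs (2 * sin (PI * (N * (P / Q) + s * x / Q))).
Proof.
  intros Hs HQ Ha HR Hsu Hsuh.
  set (u := PI * (R0 + x) / Q) in *. set (H := PI * (N * delta) / Q) in *.
  set (w := u + IZR m * PI).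
  assert (Ew : PI * (N * s * P + x) / Q = w).
  { unfold w, u. rewrite HR. field. lra. }
  assert (Halpha : alpha = (P + s * delta) / Q) by (rewrite <- Ha; field; lra).
  assert (E1 : PI * (N * alpha + s * x / Q) = s * (w + H)).
  { unfold w, H, u. rewrite HR. subst alpha. destruct Hs; subst s; field; lra. }
  assert (E2 : PI * (N * (P / Q) + s * x / Q) = s * w).
  { unfold w, u. rewrite HR. destruct Hs; subst s; field; lra. }
  destruct (shift_Z u m) as (sg & Hsg & S1 & C1).
  destruct (shift_Z (u + H) m) as (sg2 & Hsg2 & S2 & _).
  assert (Ew2 : w + H = u + H + IZR m * PI) by (unfold w; ring).
  assert (sw : sin w = sg * sin u) by exact S1.
  assert (cw : cos w = sg * cos u) by exact C1.
  assert (swh : sin (w + H) = sg2 * sin (u + H)) by (rewrite Ew2; exact S2).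
  rewrite E1, E2, !Rabs_sin_sgn by auto.
  rewrite swh, sw, !Rabs_mult.
  assert (Hsg1 : Rabs sg = 1) by (destruct Hsg; subst; [rewrite Rabs_right by lra | rewrite Rabs_left by lra]; lra).
  assert (Hsg21 : Rabs sg2 = 1) by (destruct Hsg2; subst; [rewrite Rabs_right by lra | rewrite Rabs_left by lra]; lra).
  rewrite Hsg1, Hsg21.
  assert (0 < Rabs (sin u)) by (apply Rabs_pos_lt; auto).
  assert (0 < Rabs (sin (u + H))) by (apply Rabs_pos_lt; auto).
  split; [|split; lra].
  unfold term_n, Gt. rewrite E1, E2, !Rabs_sin_sgn by auto. rewrite swh, sw, !Rabs_mult, Hsg1, Hsg21.
  f_equal.
  - f_equal. field. lra.
  - f_equal. 
    + f_equal. unfold H. field. lra.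
    + rewrite Ew. unfold cot. rewrite sw, cw. field. split; auto. destruct Hsg; lra.
Qed.

Lemma prod_pos {A} (f : A -> R) L : (forall a, In a L -> 0 < f a) -> 0 < fold_right Rmult 1 (map f L).
Proof. induction L; simpl; intros; [lra|]. apply Rmult_lt_0_compat; auto. Qed.

Lemma ln_prod {A} (f g : A -> R) L : (forall a, In a L -> 0 < f a /\ 0 < g a) ->
  ln (fold_right Rmult 1 (map f L) / fold_right Rmult 1 (map g L)) = rsum (map (fun a => ln (f a / g a)) L).
Proof.
  induction L; simpl; intros Hp.
  - replace (1/1) with 1 by field. apply ln_1.
  - assert (0 < fold_right Rmult 1 (map f L)) by (apply prod_pos; intros; apply Hp; auto).
    assert (0 < fold_right Rmult 1 (map g L)) by (apply prod_pos; intros; apply Hp; auto).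
    destruct (Hp a (or_introl eq_refl)).
    rewrite <- IHL by auto.
    replace (f a * fold_right Rmult 1 (map f L) / (g a * fold_right Rmult 1 (map g L)))
      with ((f a / g a) * (fold_right Rmult 1 (map f L) / fold_right Rmult 1 (map g L))) by (field; lra).
    apply ln_mult; apply Rdiv_lt_0_compat; auto.
Qed.

Lemma rsum_minus {A} (f g : A -> R) (L : list A) :
  rsum (map (fun a => f a - g a) L) = rsum (map f L) - rsum (map g L).
Proof. induction L; simpl; [lra|]. unfold rsum in *. simpl. rewrite IHL. ring. Qed.

Definition S0 (A x c : R) : R := if Rlt_dec (A * (2 - Rabs x)) 2 then ln (c / 4) else 0.

Lemma ln_c4_neg c : 0 < c -> c < 1 -> ln (c / 4) < 0.
Proof. intros. rewrite <- ln_1. apply ln_increasing; lra. Qed.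

Lemma S0_le0 A x c : 0 < c -> c < 1 -> S0 A x c <= 0.
Proof. intros. unfold S0. destruct Rlt_dec; [pose proof (ln_c4_neg c H H0)|]; lra. Qed.

Lemma per_n (Q D c x A eps : R) (r : Z) (u H : R) :
  11 <= Q -> 0 < eps <= D -> D < 1 -> 1 <= A -> D * A <= 1 -> -2 < x -> x <= 2 - D / (1 - c) ->
  100 / Q^2 <= c -> c < 1 ->
  (r <> 0 /\ r <> 1 /\ r <> -1)%Z -> Rabs (IZR r + x) <= Q/2 ->
  u = PI * (IZR r + x) / Q -> H = PI * eps / Q ->
  -6 * (D^2 / (IZR r + x)^2) - 16 * (D^2 / Q^2) + (if Z.eqb r (-2) then S0 A x c else 0) <= Gt u H
  /\ Gt u H <= 0 /\ sin u <> 0 /\ sin (u + H) <> 0.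
Proof.
  intros HQ He HD HA HDA Hx1 Hx2 Hc1 Hc2 Hr Hrq Hu HH.
  assert (Hc0 : 0 < c). { assert (0 < 100 / Q^2) by (apply Rdiv_lt_0_compat; [lra|apply pow_lt; lra]). lra. }
  assert (HDc : D <= D / (1 - c)).
  { apply (Rmult_le_reg_r (1 - c)); [lra|]. field_simplify; nra. }
  assert (HD2c : D <= (1 - c) * (2 - x)).
  { assert (D / (1 - c) <= 2 - x) by lra. apply (Rmult_le_reg_r (/ (1 - c))). apply Rinv_0_lt_compat; lra.
    replace ((1 - c) * (2 - x) * / (1 - c)) with (2 - x) by (field; lra). lra. }
  assert (Hrho : IZR r + x <> 0).
  { assert (0 < D / (1 - c)) by (apply Rdiv_lt_0_compat; lra).
    destruct (Z_le_gt_dec 2 r).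
    - assert (2 <= IZR r) by (apply IZR_le; lia). lra.
    - assert (IZR r <= -2) by (apply IZR_le; lia). lra. }
  assert (Hnn : 0 <= 6 * (D^2 / (IZR r + x)^2) + 16 * (D^2 / Q^2)).
  { assert (0 <= D^2 / (IZR r + x)^2) by (unfold Rdiv; apply Rmult_le_pos; [apply pow2_ge_0| apply Rlt_le, Rinv_0_lt_compat, sq_pos; auto]).
    assert (0 <= D^2 / Q^2) by (unfold Rdiv; apply Rmult_le_pos; [apply pow2_ge_0| apply Rlt_le, Rinv_0_lt_compat, pow_lt; lra]).
    lra. }
  pose proof (S0_le0 A x c Hc0 Hc2) as HS0.
  destruct (Z_le_gt_dec 2 r) as [Hr2|Hr2].
  - assert (2 <= IZR r) by (apply IZR_le; lia).
    assert (Hne : (r =? -2)%Z = false) by (apply Z.eqb_neq; lia). rewrite Hne.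
    destruct (term_reg Q (IZR r + x) eps D HQ He HD ltac:(lra) Hrq ltac:(left; lra) u H Hu HH) as (G1 & G2 & G3 & G4).
    repeat split; auto. lra.
  - assert (r <= -2)%Z by lia.
    destruct (Z.eq_dec r (-2)) as [E|E].
    + subst r. rewrite Z.eqb_refl. replace (IZR (-2)) with (-2) in * by reflexivity.
      unfold S0 in *. destruct (Rlt_dec (A * (2 - Rabs x)) 2) as [HY|HY].
      * destruct (term_spec Q (-2 + x) eps D c HQ He HD ltac:(lra) Hrq ltac:(lra) Hc1 Hc2 u H Hu HH) as (G1 & G2 & G3 & G4).
        repeat split; auto. lra.
      * assert (2 * D <= 2 - Rabs x).
        { assert (2 <= A * (2 - Rabs x)) by lra. nra. }
        pose proof (Rle_abs x).
        destruct (term_reg Q (-2 + x) eps D HQ He HD ltac:(lra) Hrq ltac:(right; lra) u H Hu HH) as (G1 & G2 & G3 & G4).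
        repeat split; auto. lra.
    + assert (IZR r <= -3) by (apply IZR_le; lia).
      assert (Hne : (r =? -2)%Z = false) by (apply Z.eqb_neq; lia). rewrite Hne.
      destruct (term_reg Q (IZR r + x) eps D HQ He HD ltac:(lra) Hrq ltac:(right; lra) u H Hu HH) as (G1 & G2 & G3 & G4).
      repeat split; auto. lra.
Qed.

Definition Jz (r : Z) : Z := if (0 <? r)%Z then (2 * r - 2)%Z else (-2 * r - 3)%Z.

Lemma Jz_inj r1 r2 : Jz r1 = Jz r2 -> r1 = r2.
Proof. unfold Jz. destruct (0 <? r1)%Z eqn:E1, (0 <? r2)%Z eqn:E2; intros; lia. Qed.

Lemma rho_J (x d : R) (r : Z) : d = 2 - Rabs x -> 0 < d ->
  (r <> 0 /\ r <> 1 /\ r <> -1)%Z ->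
  (1 <= Jz r)%Z /\ / (IZR r + x)^2 <= 16 / d^2 * / (IZR (Jz r))^2.
Proof.
  intros Hd Hd0 Hr. pose proof (Rle_abs x). pose proof (Rle_abs (-x)). rewrite Rabs_Ropp in *.
  assert (Hd2 : d <= 2) by (pose proof (Rabs_pos x); lra).
  assert (Key : (1 <= Jz r)%Z /\ d * IZR (Jz r) <= 4 * Rabs (IZR r + x) /\ 0 < Rabs (IZR r + x)).
  { unfold Jz. destruct (0 <? r)%Z eqn:E.
    - apply Z.ltb_lt in E. assert (2 <= IZR r) by (apply IZR_le; lia).
      rewrite Rabs_right by lra. split; [lia|]. rewrite minus_IZR, mult_IZR. split; [|lra].
      replace (IZR 2) with 2 by reflexivity. nra.
    - apply Z.ltb_ge in E. assert (IZR r <= -2) by (apply IZR_le; lia).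
      rewrite Rabs_left by lra. split; [lia|]. rewrite minus_IZR, mult_IZR. split; [|lra].
      replace (IZR (-2)) with (-2) by reflexivity. replace (IZR 3) with 3 by reflexivity. nra. }
  destruct Key as (HJ & Hk & Hp). split; auto.
  assert (1 <= IZR (Jz r)) by (apply IZR_le; lia).
  rewrite <- (pow2_abs (IZR r + x)).
  replace (16 / d^2 * / IZR (Jz r) ^ 2) with (/ (d * IZR (Jz r) / 4)^2) by (field; lra).
  apply Rinv_le_contravar. apply pow_lt. apply Rdiv_lt_0_compat; nra.
  apply pow_incr. split. apply Rdiv_le_0_compat_depr || (unfold Rdiv; apply Rmult_le_pos; nra). lra.
Qed.


Lemma ln4_gt1 : 1 < ln 4.
Proof. pose proof exp_le_3. rewrite <- (ln_exp 1). apply ln_increasing. apply exp_pos. lra. Qed.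

Lemma final_arith (A d c D Q S : R) :
  0 < d <= 2 -> 1 <= A -> 0 <= D -> D * A <= 1 -> 11 <= Q -> 0 < c -> c < 1 ->
  ((A * d < 2 /\ S = ln (c / 4)) \/ (2 <= A * d /\ S = 0)) ->
  - 300 * ln (4 / c) / (d ^ 2 * A ^ 2) <= -6 * D^2 * (32 / d^2) - 16 * D^2 / Q + S.
Proof.
  intros Hd HA HD HDA HQ Hc0 Hc1 HS.
  set (L := ln (4 / c)).
  assert (HL : 1 < L).
  { pose proof ln4_gt1. unfold L. assert (ln 4 <= ln (4/c)).
    { apply ln_le_mono; [lra|]. apply (Rmult_le_reg_r c); [lra|]. field_simplify; lra. }
    lra. }
  assert (HlnS : ln (c / 4) = - L).
  { unfold L. replace (4 / c) with (/ (c / 4)) by (field; lra). rewrite ln_Rinv by lra. ring. }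
  set (Y := A * d). assert (HYdef : Y = A * d) by reflexivity.
  assert (HY : 0 < Y) by (unfold Y; nra).
  assert (HD2 : D^2 * A^2 <= 1) by (replace (D^2 * A^2) with ((D*A)^2) by ring; assert (0 <= D * A) by nra; nra).
  assert (E1 : 6 * D^2 * (32 / d^2) <= 192 / Y^2).
  { unfold Y. replace (6 * D^2 * (32 / d^2)) with (192 * (D^2 * A^2) / (A^2 * d^2)) by (field; lra).
    replace (192 / (A * d)^2) with (192 * 1 / (A^2 * d^2)) by (field; lra).
    unfold Rdiv. apply Rmult_le_compat_r. left; apply Rinv_0_lt_compat; apply Rmult_lt_0_compat; apply sq_pos; lra. lra. }
  assert (E2 : 16 * D^2 / Q <= 8 / Y^2).
  { assert (16 * D^2 / Q <= 16 * D^2 / 11).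
    { unfold Rdiv. apply Rmult_le_compat_l. pose proof (pow2_ge_0 D); lra. apply Rinv_le_contravar; lra. }
    assert (16 * D^2 / 11 <= 2 / A^2).
    { replace (2 / A^2) with (2 * 1 / A^2) by (field; lra).
      replace (16 * D^2 / 11) with ((16/11) * (D^2 * A^2) / A^2) by (field; lra).
      unfold Rdiv. apply Rmult_le_compat_r. left; apply Rinv_0_lt_compat, sq_pos; lra. lra. }
    assert (2 / A^2 <= 8 / Y^2).
    { unfold Y. replace (8 / (A*d)^2) with ((2 / A^2) * (4 / d^2)) by (field; lra).
      assert (1 <= 4 / d^2).
      { apply (Rmult_le_reg_r (d^2)). apply sq_pos; lra. field_simplify; nra. }
      assert (0 < 2 / A^2) by (apply Rdiv_lt_0_compat; [lra|apply sq_pos; lra]). nra. }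
    lra. }
  replace (- 300 * L / (d^2 * A^2)) with (- 300 * L / Y^2) by (unfold Y; field; lra).
  assert (0 < / Y^2) by (apply Rinv_0_lt_compat, sq_pos; lra).
  clearbody L Y.
  destruct HS as [[HY2 HS]|[HY2 HS]]; rewrite HS.
  - rewrite HlnS.
    assert (L <= 4 * L / Y^2).
    { apply (Rmult_le_reg_r (Y^2)). apply sq_pos; lra. field_simplify; [|lra]. 
      rewrite <- HYdef in HY2. assert (Y^2 < 4) by nra. nra. }
    assert (200 / Y^2 <= 200 * L / Y^2) by (unfold Rdiv; nra).
    unfold Rdiv in *. nra.
  - assert (200 / Y^2 <= 300 * L / Y^2) by (unfold Rdiv; nra).
    unfold Rdiv in *. nra.
Qed.

Lemma idx_in alpha k M n : In n (idx alpha k M) ->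
  (1 <= n <= M)%nat /\ Z.of_nat n <> cf_q alpha (k - 1) /\ Z.of_nat n <> (cf_q alpha k - cf_q alpha (k - 1))%Z.
Proof.
  unfold idx. intros Hn. apply filter_In in Hn. destruct Hn as [H1 H2].
  apply in_seq in H1. apply andb_true_iff in H2. destruct H2 as [H2 H3].
  apply negb_true_iff, Z.eqb_neq in H2. apply negb_true_iff, Z.eqb_neq in H3.
  repeat split; auto; lia.
Qed.

Lemma idx_nodup alpha k M : NoDup (idx alpha k M).
Proof. unfold idx. apply NoDup_filter, seq_NoDup. Qed.

Lemma idx_len alpha k M : (length (idx alpha k M) <= M)%nat.
Proof. unfold idx. rewrite <- (length_seq M 1) at 2. apply filter_length_le || apply List.filter_length_le. Qed.

Lemma rsum_lb3 {T} (f h : T -> R) (a b : R) (L : list T) :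
  rsum (map (fun n => a * f n + b + h n) L) = a * rsum (map f L) + b * INR (length L) + rsum (map h L).
Proof.
  induction L; unfold rsum in *; cbn [map fold_right length]; [simpl; ring|]. rewrite IHL, S_INR. ring.
Qed.


Theorem proposition7 :
  exists C : R, C > 0 /\
  forall (alpha : R) (k M : nat) (c x : R),
    irrational alpha ->
    (1 <= k)%nat ->
    (Z.of_nat M < cf_q alpha k)%Z ->
    100 / IZR (cf_q alpha k) ^ 2 <= c -> c < 1 ->
    IZR (cf_q alpha k) * dist_int (IZR (cf_q alpha k) * alpha) <= 2 * (1 - c) ->
    -2 < x ->
    x <= 2 - IZR (cf_q alpha k) * dist_int (IZR (cf_q alpha k) * alpha) / (1 - c) ->
    - C * ln (4 / c) / ((2 - Rabs x) ^ 2 * IZR (cf_a alpha (S k)) ^ 2)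
      <= Bstar alpha k M x
    /\ Bstar alpha k M x
      <= C * (1 / (IZR (cf_a alpha (S k)) ^ 2 * IZR (cf_q alpha k))).
Proof.
  exists 300. split; [lra|].
  intros alpha k M c x Hi Hk HM Hc1 Hc2 Hqd Hx1 Hx2.
  destruct (cf_facts alpha k Hi Hk) as (p & q & p' & q' & Ep & Eq & Eq' & Hq'1 & Hq'q & Hdet & HX & HaX & Ha1 & Hqa).
  unfold Bstar, Pstar. cbv zeta.
  pose proof (idx_in alpha k M) as Hidx. pose proof (idx_nodup alpha k M) as Hnd.
  pose proof (idx_len alpha k M) as Hlen.
  set (L := idx alpha k M) in *. clearbody L.
  rewrite Ep, Eq in *. rewrite Eq' in Hidx.
  rewrite <- esg_IZR.
  set (X := cf_tail alpha (S k)) in *.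
  set (a := cf_a alpha (S k)) in *.
  set (e := esg k) in *.
  assert (He : (e = 1 \/ e = -1)%Z) by apply esg_pm.
  set (s := IZR e).
  assert (Hs : s = 1 \/ s = -1) by (unfold s; destruct He as [-> | ->]; [left|right]; reflexivity).
  set (Q := IZR q) in *. set (P := IZR p) in *. set (A := IZR a) in *.
  assert (HA1 : 1 <= A) by (apply IZR_le; lia).
  assert (Hqq' : (1 <= q)%Z) by lia.
  assert (HQ1 : 1 <= Q) by (apply IZR_le; lia).
  assert (HQ11 : 11 <= Q).
  { assert (10 < Q).
    { destruct (Rle_or_lt Q 10) as [h|h]; [|lra]. exfalso.
      assert (Q^2 <= 100) by nra.
      assert (1 <= 100 / Q^2).
      { apply (Rmult_le_reg_r (Q^2)). apply sq_pos; lra. field_simplify; lra. }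
      lra. }
    assert (10 < q)%Z by (apply lt_IZR; exact H).
    apply IZR_le. lia. }
  set (Q' := IZR q') in *.
  assert (HQ'1 : 1 <= Q') by (apply IZR_le; lia).
  set (delta := 1 / (Q * X + Q')).
  assert (Hden : Q < Q * X + Q') by nra.
  assert (Hdpos : 0 < delta) by (apply Rdiv_lt_0_compat; lra).
  assert (HsD : Q * alpha - P = s * delta) by (rewrite Hqa; unfold delta, s; field; lra).
  set (D := Q * delta).
  assert (HD1 : D < 1).
  { unfold D, delta. apply (Rmult_lt_reg_r (Q * X + Q')); [lra|]. field_simplify; lra. }
  assert (HDpos : 0 < D) by (unfold D; nra).
  assert (HDA : D * A <= 1).
  { unfold D, delta. apply (Rmult_le_reg_r (Q * X + Q')); [lra|]. field_simplify; [|lra]. nra. }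
  assert (Hdsmall : delta < 1/2).
  { assert (delta * Q < 1) by (unfold D in HD1; lra). nra. }
  assert (Hdist : dist_int (Q * alpha) = delta).
  { unfold dist_int, Defs.Zfloor.
    destruct Hs as [Hs1|Hs1]; rewrite Hs1 in HsD.
    - assert (Int_part (Q * alpha) = p).
      { symmetry. apply Int_part_spec. fold P. lra. }
      rewrite H. fold P. rewrite Rmin_left; lra.
    - assert (Int_part (Q * alpha) = (p - 1)%Z).
      { symmetry. apply Int_part_spec. rewrite minus_IZR. fold P. lra. }
      rewrite H, minus_IZR. fold P. rewrite Rmin_right; lra. }
  rewrite Hdist in *.
  fold D in Hx2.
  set (rr := fun n : nat => (e * Z.of_nat n * p - q * Defs.Zfloor ((IZR (e * Z.of_nat n * p) + x) / Q + 1/2))%Z).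
  set (rho := fun n : nat => IZR (rr n) + x).
  set (S := S0 A x c).
  assert (Hc0 : 0 < c).
  { assert (0 < 100 / Q^2) by (apply Rdiv_lt_0_compat; [lra|apply sq_pos; lra]). lra. }
  assert (HxS : x < 2).
  { assert (0 < D / (1 - c)) by (apply Rdiv_lt_0_compat; lra). lra. }
  assert (PN : forall n, In n L ->
     (rr n <> 0 /\ rr n <> 1 /\ rr n <> -1)%Z /\
     -6 * (D^2 / (rho n)^2) - 16 * (D^2 / Q^2) + (if Z.eqb (rr n) (-2) then S else 0)
        <= term_n alpha P Q s x delta (INR n) /\
     term_n alpha P Q s x delta (INR n) <= 0 /\
     0 < Rabs (2 * sin (PI * (INR n * alpha + s * x / Q))) /\
     0 < Rabs (2 * sin (PI * (INR n * (P / Q) + s * x / Q)))).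
  { intros n Hn. destruct (Hidx n Hn) as (Hn1 & Hn2 & Hn3).
    set (m := Defs.Zfloor ((IZR (e * Z.of_nat n * p) + x) / Q + 1/2)).
    assert (Hrr : rr n = (e * Z.of_nat n * p - q * m)%Z) by reflexivity.
    assert (Hex : (rr n <> 0 /\ rr n <> 1 /\ rr n <> -1)%Z).
    { rewrite Hrr. apply (NT_excl p q p' q' e (Z.of_nat n) m He Hdet); lia. }
    assert (HR0 : IZR (rr n) = s * INR n * P - Q * IZR m).
    { rewrite Hrr, minus_IZR, !mult_IZR, <- INR_IZR_INZ. reflexivity. }
    assert (Hrq : Rabs (rho n) <= Q / 2).
    { pose proof (floor_spec ((IZR (e * Z.of_nat n * p) + x) / Q + 1/2)) as Hf. fold m in Hf.
      assert (HIZ : IZR (e * Z.of_nat n * p) = s * INR n * P) by (rewrite !mult_IZR, <- INR_IZR_INZ; reflexivity).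
      rewrite HIZ in Hf.
      assert (Q * IZR m <= s * INR n * P + x + Q/2).
      { destruct Hf as [Hf _]. apply (Rmult_le_compat_l Q) in Hf; [|lra].
        replace (Q * ((s * INR n * P + x) / Q + 1/2)) with (s * INR n * P + x + Q/2) in Hf by (field; lra). lra. }
      assert (s * INR n * P + x + Q/2 < Q * IZR m + Q).
      { destruct Hf as [_ Hf]. apply (Rmult_lt_compat_l Q) in Hf; [|lra].
        replace (Q * ((s * INR n * P + x) / Q + 1/2)) with (s * INR n * P + x + Q/2) in Hf by (field; lra). lra. }
      unfold rho. rewrite HR0. apply Rabs_le. lra. }
    assert (Hn1R : 1 <= INR n) by (apply (le_INR 1); lia).
    assert (HnQ : INR n <= Q).
    { unfold Q. rewrite INR_IZR_INZ. apply IZR_le. lia. }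
    assert (Heps : 0 < INR n * delta <= D) by (unfold D; split; nra).
    destruct (per_n Q D c x A (INR n * delta) (rr n) (PI * (rho n) / Q) (PI * (INR n * delta) / Q)
                HQ11 Heps HD1 HA1 HDA Hx1 Hx2 Hc1 Hc2 Hex Hrq eq_refl eq_refl) as (G1 & G2 & G3 & G4).
    destruct (term_n_eq alpha P Q s x delta (INR n) (IZR (rr n)) m Hs ltac:(lra) HsD HR0 G3 G4) as (T1 & T2 & T3).
    fold (rho n) in T1. rewrite T1.
    split; auto. }
  assert (EB : ln (fold_right Rmult 1 (map (fun n : nat => Rabs (2 * sin (PI * (INR n * alpha + s * x / Q)))) L) /
                   fold_right Rmult 1 (map (fun n : nat => Rabs (2 * sin (PI * (INR n * (P / Q) + s * x / Q)))) L)) -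
               fold_right Rplus 0 (map (fun n : nat => sin (PI * INR n * delta / Q) * cot (PI * (INR n * s * P + x) / Q)) L)
           = rsum (map (fun n => term_n alpha P Q s x delta (INR n)) L)).
  { rewrite ln_prod.
    - unfold term_n. rewrite rsum_minus. reflexivity.
    - intros n Hn. destruct (PN n Hn) as (_ & _ & _ & h1 & h2). auto. }
  rewrite EB. clear EB.
  split.
  -
    set (d := 2 - Rabs x).
    assert (Hxa : Rabs x < 2) by (apply Rabs_def1; lra).
    assert (Hd : 0 < d <= 2) by (unfold d; pose proof (Rabs_pos x); lra).
    assert (HS0 : S <= 0) by (apply S0_le0; lra).
    assert (Hinj : forall a b, In a L -> In b L -> rr a = rr b -> a = b).
    { intros n1 n2 H1 H2 E. destruct (Hidx n1 H1) as (h1 & _). destruct (Hidx n2 H2) as (h2 & _).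
      apply Nat2Z.inj. unfold rr in E.
      apply (NT_inj p q p' q' e (Z.of_nat n1) (Z.of_nat n2) _ _ He Hdet ltac:(lia) ltac:(lia) ltac:(lia) E). }
    assert (Hnd1 : NoDup (map rr L)) by (apply NoDup_map_in; auto).
    assert (Hnd2 : NoDup (map Jz (map rr L))).
    { apply NoDup_map_in; auto. intros; apply Jz_inj; auto. }
    assert (Step1 : rsum (map (fun n => (-6 * D^2) * (/ (rho n)^2) + (-16 * D^2 / Q^2) + (if Z.eqb (rr n) (-2) then S else 0)) L)
                    <= rsum (map (fun n => term_n alpha P Q s x delta (INR n)) L)).
    { apply rsum_le. intros n Hn. destruct (PN n Hn) as (_ & h & _).
      replace ((-6 * D^2) * (/ (rho n)^2) + (-16 * D^2 / Q^2)) with (-6 * (D^2 / (rho n)^2) - 16 * (D^2 / Q^2)) by (unfold Rdiv; ring).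
      exact h. }
    rewrite rsum_lb3 in Step1.
    assert (Step2 : rsum (map (fun n => / (rho n)^2) L) <= 32 / d^2).
    { apply (Rle_trans _ (rsum (map (fun n => 16 / d^2 * / (IZR (Jz (rr n)))^2) L))).
      - apply rsum_le. intros n Hn. destruct (PN n Hn) as (Hex & _).
        destruct (rho_J x d (rr n) eq_refl ltac:(lra) Hex) as (_ & h). exact h.
      - rewrite rsum_scal.
        rewrite (rsum_map (fun j => / IZR j ^ 2) (fun n => Jz (rr n))).
        rewrite <- (map_map rr Jz).
        assert (rsum (map (fun j => / IZR j ^ 2) (map Jz (map rr L))) <= 2).
        { apply sum_inv_sq; auto. intros j Hj. apply in_map_iff in Hj. destruct Hj as [r [Er Hr]].
          apply in_map_iff in Hr. destruct Hr as [n [En Hn]]. subst.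
          destruct (PN n Hn) as (Hex & _). destruct (rho_J x d (rr n) eq_refl ltac:(lra) Hex) as (h & _). exact h. }
        assert (0 < 16 / d^2) by (apply Rdiv_lt_0_compat; [lra| apply sq_pos; lra]).
        replace (32 / d^2) with (16 / d^2 * 2) by (field; lra). nra. }
    assert (Step3 : S <= rsum (map (fun n => if Z.eqb (rr n) (-2) then S else 0) L)).
    { rewrite (rsum_map (fun j => if Z.eqb j (-2) then S else 0) rr). apply sum_indicator; auto. }
    assert (Step4 : INR (length L) <= Q).
    { apply (Rle_trans _ (INR M)). apply le_INR; auto. unfold Q. rewrite INR_IZR_INZ. apply IZR_le. lia. }
    assert (Step5 : -16 * D^2 / Q <= (-16 * D^2 / Q^2) * INR (length L)).
    { replace (-16 * D^2 / Q) with ((-16 * D^2 / Q^2) * Q) by (field; lra).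
      assert (-16 * D^2 / Q^2 <= 0).
      { unfold Rdiv. assert (0 < / Q^2) by (apply Rinv_0_lt_compat, sq_pos; lra). nra. }
      assert (0 <= INR (length L)) by apply pos_INR. nra. }
    assert (Step6 : -6 * D^2 * (32 / d^2) <= (-6 * D^2) * rsum (map (fun n => / (rho n)^2) L)).
    { assert (0 <= D^2) by apply pow2_ge_0. nra. }
    assert (HSd : (A * d < 2 /\ S = ln (c / 4)) \/ (2 <= A * d /\ S = 0)).
    { unfold S, S0. fold d. destruct (Rlt_dec (A * d) 2); [left|right]; split; auto; lra. }
    pose proof (final_arith A d c D Q S Hd HA1 ltac:(lra) HDA HQ11 Hc0 Hc2 HSd).
    lra.
  -
    apply (Rle_trans _ (rsum (map (fun n : nat => 0) L))).
    + apply rsum_le. intros n Hn. destruct (PN n Hn) as (_ & _ & h & _). auto.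
    + replace (rsum (map (fun _ : nat => 0) L)) with 0.
      2:{ clear. induction L; simpl; auto. unfold rsum in *. simpl. rewrite <- IHL. ring. }
      apply Rmult_le_pos; [lra|]. apply Rlt_le. apply Rdiv_lt_0_compat; [lra|].
      apply Rmult_lt_0_compat; [apply sq_pos|]; lra.
Qed.
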